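(* Let $n\ge 2$ and $M,M'\in M_n(k)$. Then the DG algebras $\mathcal{A}_{\mathcal{O}_{-1}(k^n)}(M)$ and $\mathcal{A}_{\mathcal{O}_{-1}(k^n)}(M')$ are isomorphic (as DG algebras) if and only if there exists $C=(c_{ij})_{n\times n}\in \mathrm{QPL}_n(k)$ such that $M'=C^{-1}M\,(c_{ij}^2)_{n\times n}$.
   Context: $k$ is an algebraically closed field of characteristic zero. A connected cochain DG algebra is a graded $k$-algebra $\mathcal{A}=\bigoplus_{i\ge0}\mathcal{A}^i$ with $\mathcal{A}^0=k$ and a degree $+1$ differential $\partial$ with $\partial^2=0$ satisfying the Leibniz rule $\partial(ab)=\partial(a)b+(-1)^{|a|}a\partial(b)$. $\mathcal{O}_{-1}(k^n)$ is the graded $k$-algebra generated by degree-one elements $x_1,\dots,x_n$ subject to $x_ix_j=-x_jx_i$ for $1\le i<j\le n$. For $M=(m_{ij})\in M_n(k)$, $\mathcal{A}_{\mathcal{O}_{-1}(k^n)}(M)$ denotes the connected cochain DG algebra with underlying graded algebra $\mathcal{O}_{-1}(k^n)$ and differential determined by $\partial(x_i)=\sum_{j=1}^n m_{ij}x_j^2$ and the Leibniz rule. A DG algebra isomorphism is an isomorphism of graded algebras commuting with the differentials. $\mathrm{QPL}_n(k)$ is the set of invertible $n\times n$ matrices over $k$ having exactly one nonzero entry in each row and each column (nonsingular quasi-permutation matrices). For $C=(c_{ij})$, $(c_{ij}^2)_{n\times n}$ is the matrix of entrywise squares. *)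

(* Defs.v *)
From HB Require Import structures.
From mathcomp Require Import all_boot all_order all_algebra.
From mathcomp Require Import mpoly.
Set Implicit Arguments. Unset Strict Implicit. Unset Printing Implicit Defensive.
Import Order.TTheory GRing.Theory.
Local Open Scope ring_scope.

(* The graded algebra O_{-1}(k^n) is modelled on the k-vector space
   {mpoly k[n]}, whose basis is the set of ordered monomials
   x^a = x_1^{a_1} ... x_n^{a_n}  ('X_[a]).  The (skew) multiplication is
   x^a * x^b = (-1)^{sum_{i>j} a_i b_j} x^{a+b}, which is exactly the
   product of O_{-1}(k^n) (x_i x_j = - x_j x_i for i <> j) in this basis. *)

Section Skew.
Variables (k : fieldType) (n : nat).

Definition osign (m1 m2 : 'X_{1..n}) : k :=
  (-1) ^+ (\sum_(i < n) \sum_(j < n | (j < i)%N) (m1 i * m2 j))%N.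

Definition omul (p q : {mpoly k[n]}) : {mpoly k[n]} :=
  \sum_(m1 <- msupp p) \sum_(m2 <- msupp q)
     (osign m1 m2 * p@_m1 * q@_m2) *: 'X_[(m1 + m2)%MM].

Definition ogen (i : 'I_n) : {mpoly k[n]} := 'X_i.

Definition ohomog (d : nat) (p : {mpoly k[n]}) : bool :=
  all (fun m => mdeg m == d) (msupp p).

Definition dgen (M : 'M[k]_n) (i : 'I_n) : {mpoly k[n]} :=
  \sum_(j < n) M i j *: omul (ogen j) (ogen j).

(* For the ordered monomial x^a, the (s+1)-th copy of x_i splits x^a as
   x^a = L * x_i * R with L = x_1^{a_1}..x_{i-1}^{a_{i-1}} x_i^s and
   R = x_i^{a_i-s-1} x_{i+1}^{a_{i+1}} .. x_n^{a_n}. *)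
Definition mleft (a : 'X_{1..n}) (i : 'I_n) (s : nat) : 'X_{1..n} :=
  [multinom (if (j < i)%N then a j else if j == i then s else 0%N) | j < n].
Definition mright (a : 'X_{1..n}) (i : 'I_n) (s : nat) : 'X_{1..n} :=
  [multinom (if (j < i)%N then 0%N else if j == i then (a i - s - 1)%N
             else a j) | j < n].

(* The differential of A(M) on a basis monomial: the unique extension by the
   graded Leibniz rule, d(y_1...y_N) = sum_t (-1)^{t-1} y_1..y_{t-1} d(y_t)
   y_{t+1}..y_N, for degree-one letters y_t. *)
Definition dmon (M : 'M[k]_n) (a : 'X_{1..n}) : {mpoly k[n]} :=
  \sum_(i < n) \sum_(s < a i)
    ((-1) ^+ (mdeg (mleft a i s))) *:
       omul (omul 'X_[mleft a i s] (dgen M i)) 'X_[mright a i s].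

Definition dA (M : 'M[k]_n) (p : {mpoly k[n]}) : {mpoly k[n]} :=
  \sum_(m <- msupp p) p@_m *: dmon M m.

Definition graded_alg_iso (phi : {mpoly k[n]} -> {mpoly k[n]}) : Prop :=
  [/\ (forall (c : k) p q, phi (c *: p + q) = c *: phi p + phi q),
      phi 1 = 1,
      (forall p q, phi (omul p q) = omul (phi p) (phi q)),
      (forall d p, ohomog d p -> ohomog d (phi p)) &
      bijective phi].

Definition dg_isomorphic (M M' : 'M[k]_n) : Prop :=
  exists phi : {mpoly k[n]} -> {mpoly k[n]},
    graded_alg_iso phi /\ forall p, phi (dA M p) = dA M' (phi p).

Definition QPL (C : 'M[k]_n) : bool :=
  [&& C \in unitmx,
      [forall i, #|[set j | C i j != 0]| == 1%N] &
      [forall j, #|[set i | C i j != 0]| == 1%N]].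

End Skew.

(* Main.v *)
Require Import Defs.
From HB Require Import structures.
From mathcomp Require Import all_boot all_order all_algebra.
From mathcomp Require Import mpoly.
From mathcomp Require Import all_fingroup.
From mathcomp Require Import ring zify.
Import GRing.Theory.
Local Open Scope ring_scope.

Module P1.
Set Implicit Arguments. Unset Strict Implicit. Unset Printing Implicit Defensive.
Import GRing.Theory.
Local Open Scope ring_scope.

Section Lin.
Variables (k : fieldType) (n : nat).
Local Notation P := {mpoly k[n]}.
Local Notation MN := 'X_{1..n}.

Definition lin_ext (V : lmodType k) (F : MN -> V) (p : P) : V :=
  \sum_(m <- msupp p) p@_m *: F m.

Definition is_lin (V : lmodType k) (f : P -> V) :=
  forall (c : k) p q, f (c *: p + q) = c *: f p + f q.

Lemma lin_ext_seq (V : lmodType k) (F : MN -> V) p s :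
  uniq s -> {subset msupp p <= s} -> lin_ext F p = \sum_(m <- s) p@_m *: F m.
Proof.
move=> us sub; rewrite (bigID (fun m => m \in msupp p)) /=.
rewrite [X in _ + X]big1 ?addr0; last first.
  by move=> m /memN_msupp_eq0 ->; rewrite scale0r.
rewrite -big_filter /lin_ext; apply: perm_big; apply: uniq_perm.
- exact: msupp_uniq.
- exact: filter_uniq.
- by move=> m; rewrite mem_filter; case: (boolP (m \in msupp p)) => // /sub ->.
Qed.

Lemma lin_ext_lin (V : lmodType k) (F : MN -> V) : is_lin (lin_ext F).
Proof.
move=> c p q.
set s := undup (msupp p ++ msupp q ++ msupp (c *: p + q)).
have us : uniq s by apply: undup_uniq.
have sub : forall r : P, {subset msupp r <= msupp p ++ msupp q ++ msupp (c *: p + q)} ->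
   {subset msupp r <= s}.
  by move=> r Hr m Hm; rewrite mem_undup; apply: Hr.
rewrite !(@lin_ext_seq _ _ _ s) //; last 3 first.
- by apply: sub => m; rewrite !mem_cat => ->; rewrite ?orbT.
- by apply: sub => m; rewrite !mem_cat => ->; rewrite ?orbT.
- by apply: sub => m; rewrite !mem_cat => ->; rewrite ?orbT.
rewrite scaler_sumr -big_split /=; apply: eq_bigr => m _.
by rewrite mcoeffD mcoeffZ scalerDl scalerA.
Qed.

Lemma lin_extX (V : lmodType k) (F : MN -> V) m : lin_ext F 'X_[m] = F m.
Proof. by rewrite /lin_ext msuppX big_seq1 mcoeffX eqxx scale1r. Qed.

Lemma lin0 (V : lmodType k) (f : P -> V) : is_lin f -> f 0 = 0.
Proof.
move=> lf; have := lf 1 0 0; rewrite !scale1r addr0 => H.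
by apply/(addrI (f 0)); rewrite addr0 -H.
Qed.

Lemma linZ (V : lmodType k) (f : P -> V) c p : is_lin f -> f (c *: p) = c *: f p.
Proof. by move=> lf; have := lf c p 0; rewrite addr0 lin0 // addr0. Qed.

Lemma linD (V : lmodType k) (f : P -> V) p q : is_lin f -> f (p + q) = f p + f q.
Proof. by move=> lf; have := lf 1 p q; rewrite !scale1r. Qed.

Lemma lin_sum (V : lmodType k) (f : P -> V) (I : Type) (r : seq I) (G : I -> P) :
  is_lin f -> f (\sum_(i <- r) G i) = \sum_(i <- r) f (G i).
Proof.
move=> lf; elim: r => [|x r IH]; first by rewrite !big_nil lin0.
by rewrite !big_cons linD // IH.
Qed.

Lemma lin_extE (V : lmodType k) (f : P -> V) p :
  is_lin f -> f p = lin_ext (fun m => f 'X_[m]) p.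
Proof.
move=> lf; rewrite {1}(mpolyE p) lin_sum //; apply: eq_bigr => m _.
by rewrite linZ.
Qed.

Lemma lin_eq (V : lmodType k) (f g : P -> V) p :
  is_lin f -> is_lin g -> (forall m, f 'X_[m] = g 'X_[m]) -> f p = g p.
Proof.
move=> lf lg H; rewrite (lin_extE p lf) (lin_extE p lg).
by apply: eq_bigr => m _; rewrite H.
Qed.

Lemma lin_comp (f g : P -> P) : is_lin f -> is_lin g -> is_lin (f \o g).
Proof. by move=> lf lg c p q /=; rewrite lg lf. Qed.

Lemma omulE p q : omul p q =
  lin_ext (fun m1 => lin_ext (fun m2 => osign k m1 m2 *: ('X_[(m1 + m2)%MM] : P)) q) p.
Proof.
rewrite /omul /lin_ext; apply: eq_bigr => m1 _; rewrite scaler_sumr.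
apply: eq_bigr => m2 _; rewrite !scalerA; congr (_ *: _).
ring.
Qed.

Lemma omul_linl q : is_lin (fun p : P => omul p q).
Proof. by move=> c p p'; rewrite !omulE lin_ext_lin. Qed.

Lemma lin_ext_linF (V : lmodType k) (G : MN -> P -> V) p :
  (forall m, is_lin (G m)) -> is_lin (fun q => lin_ext (fun m => G m q) p).
Proof.
move=> lG c q q'; rewrite /lin_ext scaler_sumr -big_split /=.
by apply: eq_bigr => m _; rewrite lG scalerDr !scalerA mulrC.
Qed.

Lemma omul_linr p : is_lin (fun q : P => omul p q).
Proof.
move=> c q q'; rewrite !omulE.
exact: (lin_ext_linF (G := fun m1 (q : P) => lin_ext (fun m2 => osign k m1 m2 *: ('X_[(m1 + m2)%MM] : P)) q) p (fun m => lin_ext_lin _)).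
Qed.

Lemma omulXX (a b : MN) : omul ('X_[a] : P) 'X_[b] = osign k a b *: 'X_[(a + b)%MM].
Proof. by rewrite omulE !lin_extX. Qed.

End Lin.

End P1.
Import P1.

Module P2.
Set Implicit Arguments. Unset Strict Implicit. Unset Printing Implicit Defensive.
Import GRing.Theory.
Local Open Scope ring_scope.

Section Sign.
Variables (k : fieldType) (n : nat).
Local Notation P := {mpoly k[n]}.
Local Notation MN := 'X_{1..n}.

Lemma sgn_dbl (e : nat) : (-1) ^+ (e + e) = 1 :> k.
Proof. by rewrite -signr_odd addnn odd_double. Qed.

Lemma osignDl (m1 m2 m3 : MN) : osign k (m1 + m2) m3 = osign k m1 m3 * osign k m2 m3.
Proof.
rewrite /osign -exprD -big_split /=; congr (_ ^+ _); apply: eq_bigr => i _.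
by rewrite -big_split /=; apply: eq_bigr => j _; rewrite mnmDE mulnDl.
Qed.

Lemma osignDr (m1 m2 m3 : MN) : osign k m1 (m2 + m3) = osign k m1 m2 * osign k m1 m3.
Proof.
rewrite /osign -exprD -big_split /=; congr (_ ^+ _); apply: eq_bigr => i _.
by rewrite -big_split /=; apply: eq_bigr => j _; rewrite mnmDE mulnDr.
Qed.

Lemma osign_dbll (m1 m2 : MN) : osign k (m1 + m1) m2 = 1.
Proof. by rewrite osignDl /osign -exprD sgn_dbl. Qed.

Lemma osign_dblr (m1 m2 : MN) : osign k m1 (m2 + m2) = 1.
Proof. by rewrite osignDr /osign -exprD sgn_dbl. Qed.

Lemma osign_LR (a : MN) (i : 'I_n) s : osign k (mleft a i s) (mright a i s) = 1.
Proof.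
rewrite /osign big1 ?expr0 // => p _; rewrite big1 // => q qp.
rewrite !mnmE.
case: (ltnP p i) => [pi|ip].
  by rewrite (ltn_trans qp pi) muln0.
case: eqP => [pe|]; last by rewrite mul0n.
by rewrite -pe qp muln0.
Qed.

Lemma osignUU (j : 'I_n) : osign k U_(j) U_(j) = 1.
Proof.
rewrite /osign big1 ?expr0 // => p _; rewrite big1 // => q qp.
rewrite !mnm1E; case: (eqVneq j p) => [jp|]; last by rewrite mul0n.
rewrite jp; case: eqP => [pq|]; last by rewrite muln0.
by move: qp; rewrite pq ltnn.
Qed.

Lemma ogen_sq (j : 'I_n) : omul (ogen k j) (ogen k j) = 'X_[(U_(j) + U_(j))%MM].
Proof. by rewrite /ogen omulXX osignUU scale1r. Qed.

Lemma dgenE (M : 'M[k]_n) i :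
  dgen M i = \sum_(j < n) M i j *: ('X_[(U_(j) + U_(j))%MM] : P).
Proof. by apply: eq_bigr => j _; rewrite ogen_sq. Qed.

Lemma mdeg_mleft (a : MN) (i : 'I_n) s :
  mdeg (mleft a i s) = (\sum_(j < n | (j < i)%N) a j + s)%N.
Proof.
rewrite mdegE.
have E : (\sum_(j < n) (if j == i then s else 0))%N = s.
  by rewrite -big_mkcond /= big_pred1_eq.
rewrite -[in RHS]E [X in (X + _)%N]big_mkcond -big_split /=; apply: eq_bigr => j _; rewrite mnmE.
case: (eqVneq j i) => [->|ne]; first by rewrite ltnn ?eqxx.
by rewrite addn0.
Qed.

Lemma mleft_right (a : MN) (i : 'I_n) s : (s < a i)%N ->
  (mleft a i s + mright a i s)%MM = (a - U_(i))%MM.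
Proof.
move=> sa; apply/mnmP => j; rewrite mnmDE mnmBE mnm1E !mnmE.
case: (eqVneq i j) => [<-|ne]; first by rewrite ltnn ?eqxx /=; lia.
by case: ltnP => ji; rewrite ?subn0 ?addn0.
Qed.

Lemma sum_sign (t N : nat) :
  \sum_(s < N) (-1) ^+ (t + s) = (-1) ^+ t * (odd N)%:R :> k.
Proof.
elim: N => [|N IH]; first by rewrite big_ord0 mulr0.
have sN : (-1) ^+ N = (-1) ^+ (odd N) :> k by rewrite signr_odd.
rewrite big_ord_recr /= IH exprD sN.
by case: (odd N) => /=; rewrite ?expr0 ?expr1; ring.
Qed.

Lemma dmonE (M : 'M[k]_n) (a : MN) :
  dmon M a = \sum_(i < n) ((-1) ^+ (\sum_(j < n | (j < i)%N) a j) * (odd (a i))%:R)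
     *: \sum_(l < n) M i l *: ('X_[(a - U_(i) + (U_(l) + U_(l)))%MM] : P).
Proof.
apply: eq_bigr => i _; rewrite -sum_sign scaler_suml; apply: eq_bigr => s _.
rewrite mdeg_mleft; congr (_ *: _).
rewrite dgenE (lin_sum _ _ (omul_linr _)) (lin_sum _ _ (omul_linl _)).
apply: eq_bigr => l _.
rewrite (linZ _ _ (omul_linr _)) (linZ _ _ (omul_linl _)); congr (_ *: _).
rewrite omulXX osign_dblr scale1r omulXX.
rewrite osignDl osign_dbll osign_LR mulr1 scale1r.
congr ('X_[_]); rewrite -(mleft_right (ltn_ord s)).
by apply/mnmP => j; rewrite !mnmDE; lia.
Qed.

End Sign.

End P2.
Import P2.

Module P3.
Set Implicit Arguments. Unset Strict Implicit. Unset Printing Implicit Defensive.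
Import GRing.Theory.
Local Open Scope ring_scope.

Section Gen.
Variables (k : fieldType) (n : nat).
Local Notation P := {mpoly k[n]}.
Local Notation MN := 'X_{1..n}.

Lemma mcoeff_sum (I : Type) (r : seq I) (F : I -> P) m :
  (\sum_(i <- r) F i)@_m = \sum_(i <- r) (F i)@_m.
Proof. exact: (raddf_sum (mcoeff m)). Qed.

Lemma UU_eq (a b l : 'I_n) : ((U_(a) + U_(b))%MM == (U_(l) + U_(l))%MM) = (a == l) && (b == l).
Proof.
apply/eqP/andP => [/mnmP /(_ l)|[/eqP -> /eqP ->]] //.
rewrite !mnmDE !mnm1E eqxx.
by case: (a == l); case: (b == l).
Qed.

Lemma UUl_eq (l m : 'I_n) : ((U_(l) + U_(l))%MM == (U_(m) + U_(m))%MM) = (l == m).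
Proof. by rewrite UU_eq andbb. Qed.

Lemma osignUV (i j : 'I_n) : osign k U_(i) U_(j) = (-1) ^+ (j < i)%N.
Proof.
rewrite /osign; congr (_ ^+ _).
rewrite (bigD1 i) //= [X in (_ + X)%N]big1 ?addn0; last first.
  by move=> p /negbTE hp; apply: big1 => q _; rewrite mnm1E eq_sym hp.
rewrite big_mkcond /=.
rewrite (eq_bigr (fun q => if q == j then nat_of_bool (j < i)%N else 0%N)).
  by rewrite -big_mkcond /= big_pred1_eq.
move=> q _; rewrite !mnm1E eqxx mul1n.
by case: (eqVneq q j) => [->|ne]; rewrite ?eqxx //; case: ifP => // _; rewrite eq_sym (negbTE ne).
Qed.

Lemma coef_sq (al be : 'I_n -> k) (l : 'I_n) :
  (omul (\sum_a al a *: ('X_a : P)) (\sum_b be b *: ('X_b : P)))@_(U_(l) + U_(l)) = al l * be l.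
Proof.
rewrite (lin_sum _ _ (omul_linl _)) mcoeff_sum (bigD1 l) //= [X in _ + X]big1 ?addr0; last first.
  move=> a /negbTE al'.
  rewrite (linZ _ _ (omul_linl _)) (lin_sum _ _ (omul_linr _)) mcoeffZ mcoeff_sum big1 ?mulr0 //.
  by move=> b _; rewrite (linZ _ _ (omul_linr _)) omulXX !mcoeffZ mcoeffX UU_eq al' !mulr0.
rewrite (linZ _ _ (omul_linl _)) (lin_sum _ _ (omul_linr _)) mcoeffZ mcoeff_sum (bigD1 l) //= [X in _ + X]big1 ?addr0; last first.
  move=> b /negbTE bl.
  by rewrite (linZ _ _ (omul_linr _)) omulXX !mcoeffZ mcoeffX UU_eq bl andbF !mulr0.
by rewrite (linZ _ _ (omul_linr _)) omulXX !mcoeffZ mcoeffX UU_eq eqxx osignUU !mulr1.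
Qed.

Lemma coef_sqsum (al : 'I_n -> k) (m : 'I_n) :
  (\sum_l al l *: ('X_[(U_(l) + U_(l))%MM] : P))@_(U_(m) + U_(m)) = al m.
Proof.
rewrite mcoeff_sum (bigD1 m) //= [X in _ + X]big1 ?addr0.
  by rewrite mcoeffZ mcoeffX eqxx mulr1.
by move=> l /negbTE lm; rewrite mcoeffZ mcoeffX UUl_eq lm mulr0.
Qed.

Lemma coef_gen (al : 'I_n -> k) (m : 'I_n) :
  (\sum_l al l *: ('X_l : P))@_(U_(m)) = al m.
Proof.
rewrite mcoeff_sum (bigD1 m) //= [X in _ + X]big1 ?addr0.
  by rewrite mcoeffZ mcoeffX eqxx mulr1.
by move=> l /negbTE lm; rewrite mcoeffZ mcoeffX eq_mnm1 lm mulr0.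
Qed.

Lemma dA_X (M : 'M[k]_n) (m : MN) : dA M 'X_[m] = dmon M m.
Proof. exact: (lin_extX (dmon M)). Qed.

Lemma dA_lin (M : 'M[k]_n) : is_lin (dA M).
Proof. exact: (lin_ext_lin (dmon M)). Qed.

Lemma dA_gen (M : 'M[k]_n) (i : 'I_n) :
  dA M 'X_i = \sum_l M i l *: ('X_[(U_(l) + U_(l))%MM] : P).
Proof.
rewrite dA_X dmonE (bigD1 i) //= [X in _ + X]big1 ?addr0.
  rewrite big1 ?expr0 ?mnm1E ?eqxx ?mul1r ?scale1r.
    by apply: eq_bigr => l _; congr (_ *: 'X_[_]); apply/mnmP => j; rewrite !mnmDE mnmBE subnn.
  by move=> j ji; rewrite mnm1E; case: eqP => // e; move: ji; rewrite e ltnn.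
by move=> j /negbTE ji; rewrite mnm1E eq_sym ji mulr0 scale0r.
Qed.

Lemma homog1_gen (p : P) : ohomog 1 p -> p = \sum_j p@_U_(j) *: 'X_j.
Proof.
move=> /allP hp.
rewrite {1}(mpolyE p) -/(lin_ext (fun m => ('X_[m] : P)) p).
rewrite (@lin_ext_seq _ _ _ _ _ [seq (U_(j))%MM | j <- enum 'I_n]).
- by rewrite big_map big_enum.
- rewrite map_inj_uniq ?enum_uniq // => a b /eqP; rewrite eq_mnm1 => /eqP //.
- move=> m /hp /mdeg1P [j /eqP ->]; apply/mapP; exists j => //; by rewrite mem_enum.
Qed.

End Gen.

End P3.
Import P3.

Module P4.
Set Implicit Arguments. Unset Strict Implicit. Unset Printing Implicit Defensive.
Import GRing.Theory.
Local Open Scope ring_scope.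

Section Forward.
Variables (k : fieldType) (n : nat).
Local Notation P := {mpoly k[n]}.
Local Notation MN := 'X_{1..n}.

Lemma unit_colinj (C : 'M[k]_n) (v : 'cV[k]_n) : C \in unitmx -> C *m v = 0 -> v = 0.
Proof. by move=> u h; rewrite -(mulKmx u v) h mulmx0. Qed.

Lemma unit_rowinj (C : 'M[k]_n) (v : 'rV[k]_n) : C \in unitmx -> v *m C = 0 -> v = 0.
Proof. by move=> u h; rewrite -(mulmxK u v) h mul0mx. Qed.

Lemma QPL_of (C : 'M[k]_n) : C \in unitmx ->
  (forall i j l, i != j -> C i l * C j l = 0) -> QPL C.
Proof.
move=> uC anti.
have rowex : forall i, exists j, C i j != 0.
  move=> i; case: (pickP (fun j => C i j != 0)) => [j hj|h]; first by exists j.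
  have : (delta_mx 0 i : 'rV[k]_n) = 0.
    apply: (unit_rowinj uC); rewrite -rowE; apply/matrixP => a b.
    by have := h b; rewrite !mxE /=; case: eqP.
  by move/matrixP/(_ 0 i); rewrite !mxE !eqxx => /eqP; rewrite oner_eq0.
have colex : forall j, exists i, C i j != 0.
  move=> j; case: (pickP (fun i => C i j != 0)) => [i hi|h]; first by exists i.
  have : (delta_mx j 0 : 'cV[k]_n) = 0.
    apply: (unit_colinj uC); rewrite -colE; apply/matrixP => a b.
    by have := h a; rewrite !mxE /=; case: eqP.
  by move/matrixP/(_ j 0); rewrite !mxE !eqxx => /eqP; rewrite oner_eq0.
have colz : forall i r j, C i j != 0 -> r != i -> C r j = 0.
  move=> i r j nz ri; have := anti r i j ri.
  by move/eqP; rewrite mulf_eq0 (negbTE nz) orbF => /eqP.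
have rowu : forall i j j', C i j != 0 -> C i j' != 0 -> j' = j.
  move=> i j j' nz nz'; apply/eqP/negP => /negP jj.
  pose v : 'cV[k]_n := C i j' *: delta_mx j 0 - C i j *: delta_mx j' 0.
  have : v = 0.
    apply: (unit_colinj uC); rewrite /v mulmxBr -!scalemxAr -!colE.
    apply/matrixP => r z; rewrite !mxE.
    case: (eqVneq r i) => [->|ri]; first by rewrite mulrC subrr.
    by rewrite (colz i r j) // (colz i r j') // !mulr0 subrr.
  move/matrixP/(_ j 0); rewrite /v !mxE !eqxx eq_sym (negbTE jj) /= mulr1 mulr0 subr0.
  by move/eqP; rewrite (negbTE nz').
apply/and3P; split => //.
- apply/forallP => i; have [j hj] := rowex i.
  rewrite (_ : [set j0 | C i j0 != 0] = [set j]) ?cards1 //.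
  apply/setP => j'; rewrite !inE; apply/idP/eqP => [h|->] //.
  exact: rowu h.
- apply/forallP => j; have [i hi] := colex j.
  rewrite (_ : [set i0 | C i0 j != 0] = [set i]) ?cards1 //.
  apply/setP => i'; rewrite !inE; apply/idP/eqP => [h|->] //.
  by case: (eqVneq i' i) => // ne; move: h; rewrite (colz i i' j) ?eqxx.
Qed.


Lemma forward (two : 2%:R != 0 :> k) (M M' : 'M[k]_n) :
  dg_isomorphic M M' -> exists C : 'M[k]_n,
    QPL C /\ M' = invmx C *m M *m map_mx (fun c => c ^+ 2) C.
Proof.
case=> phi [[lphi ph1 mul hom bij] comm].
have lin : is_lin phi by exact: lphi.
pose c i j := (phi 'X_i)@_U_(j).
have phiX : forall i, phi 'X_i = \sum_j c i j *: ('X_j : P).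
  move=> i; apply: homog1_gen; apply: hom.
  by rewrite /ohomog msuppX /= mdeg1.
pose C := \matrix_(i, j) c i j.
have anti : forall i j l, i != j -> C i l * C j l = 0.
  move=> i j l ij.
  have H0 : omul (phi 'X_i) (phi 'X_j) + omul (phi 'X_j) (phi 'X_i) = 0.
    rewrite -!mul -(linD _ _ lin) !omulXX !osignUV addmC.
    case: (ltngtP i j) => h; last by move: ij; rewrite (val_inj h) eqxx.
      by rewrite expr0 expr1 scaleN1r scale1r addrN (lin0 lin).
    by rewrite expr0 expr1 scaleN1r scale1r addNr (lin0 lin).
  have := congr1 (mcoeff (U_(l) + U_(l))) H0.
  rewrite mcoeffD !phiX !coef_sq mcoeff0 !mxE [c j l * _]mulrC => /eqP.
  by rewrite -mulr2n -mulr_natl mulf_eq0 (negbTE two) /= => /eqP.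
have unitC : C \in unitmx.
  case: (boolP (C \in unitmx)) => // nu; exfalso.
  have : kermx C != 0 by rewrite kermx_eq0 row_free_unit.
  case: (pickP (fun r => row r (kermx C) != 0)) => [r hr|h]; last first.
    move/eqP; apply; apply/matrixP => a b.
    by have := h a; rewrite /= => /negbT; rewrite negbK => /eqP/matrixP/(_ 0 b); rewrite !mxE.
  move=> _; set v := row r (kermx C).
  have vC : v *m C = 0 by rewrite /v -row_mul mulmx_ker row0.
  pose q : P := \sum_i v 0 i *: 'X_i.
  have pq : phi q = phi 0.
    rewrite (lin0 lin) /q (lin_sum _ _ lin).
    rewrite (eq_bigr (fun i => \sum_j (v 0 i * c i j) *: ('X_j : P))); last first.
      by move=> i _; rewrite (linZ _ _ lin) phiX scaler_sumr; apply: eq_bigr => j _; rewrite scalerA.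
    rewrite exchange_big /= big1 // => j _.
    rewrite -scaler_suml.
    have -> : \sum_i v 0 i * c i j = (v *m C) 0 j by rewrite [RHS]mxE; apply: eq_bigr => i _; rewrite [C i j]mxE.
    by rewrite vC mxE scale0r.
  have q0 := bij_inj bij pq.
  move/negP: hr; apply; rewrite -/v; apply/eqP/matrixP => a b.
  have := congr1 (mcoeff U_(b)) q0; rewrite /q coef_gen mcoeff0 => e.
  by rewrite (ord1 a) e [RHS]mxE.
exists C; split; first exact: QPL_of.
have eqM : M *m map_mx (fun c => c ^+ 2) C = C *m M'.
  apply/matrixP => i m; rewrite !mxE.
  have := congr1 (mcoeff (U_(m) + U_(m))) (comm 'X_i).
  rewrite dA_gen phiX (lin_sum _ _ lin) (lin_sum _ _ (dA_lin M')) !mcoeff_sum => E.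
  transitivity (\sum_j (phi (M i j *: ('X_[(U_(j) + U_(j))%MM] : P)))@_(U_(m) + U_(m))).
    apply: eq_bigr => j _; rewrite (linZ _ _ lin) mcoeffZ !mxE.
    rewrite -ogen_sq /ogen mul !phiX coef_sq; congr (_ * _); by rewrite expr2.
  rewrite E; apply: eq_bigr => j _; rewrite (linZ _ _ (dA_lin M')) mcoeffZ dA_gen coef_sqsum.
  by rewrite mxE.
by rewrite -mulmxA eqM mulKmx.
Qed.

End Forward.

End P4.
Import P4.

Module P5.
Set Implicit Arguments. Unset Strict Implicit. Unset Printing Implicit Defensive.
Import GRing.Theory.
Local Open Scope ring_scope.

Section Signs.
Variables (k : fieldType) (n : nat).
Local Notation P := {mpoly k[n]}.
Local Notation MN := 'X_{1..n}.

Definition sg (e : nat) : k := (-1) ^+ e.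
Definition Fq (Q : 'I_n -> 'I_n -> nat) (a b : MN) : nat :=
  \sum_i \sum_j Q i j * (a i * b j).
Definition Gq (q : 'I_n -> nat) (a : MN) : nat := \sum_j q j * a j.

Lemma sgD e1 e2 : sg (e1 + e2) = sg e1 * sg e2.
Proof. exact: exprD. Qed.

Lemma sg_dbl e : sg (e + e) = 1.
Proof. exact: sgn_dbl. Qed.

Lemma sg_sum (I : Type) (r : seq I) (F : I -> nat) :
  sg (\sum_(i <- r) F i) = \prod_(i <- r) sg (F i).
Proof.
elim: r => [|x r IH]; first by rewrite !big_nil /sg expr0.
by rewrite !big_cons sgD IH.
Qed.

Lemma sg_par e1 e2 : odd e1 = odd e2 -> sg e1 = sg e2.
Proof. by move=> h; rewrite /sg -signr_odd h signr_odd. Qed.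

Lemma sg_mulpar q q' x : odd q = odd q' -> sg (q * x) = sg (q' * x).
Proof. by move=> h; apply: sg_par; rewrite !oddM h. Qed.

Lemma FDl Q a1 a2 b : Fq Q (a1 + a2) b = (Fq Q a1 b + Fq Q a2 b)%N.
Proof.
rewrite /Fq -big_split; apply: eq_bigr => i _; rewrite -big_split.
by apply: eq_bigr => j _; rewrite mnmDE /=; nia.
Qed.

Lemma FDr Q a b1 b2 : Fq Q a (b1 + b2) = (Fq Q a b1 + Fq Q a b2)%N.
Proof.
rewrite /Fq -big_split; apply: eq_bigr => i _; rewrite -big_split.
by apply: eq_bigr => j _; rewrite mnmDE /=; nia.
Qed.

Lemma Fflip Q a b : Fq Q a b = Fq (fun i j => Q j i) b a.
Proof.
rewrite /Fq exchange_big; apply: eq_bigr => i _; apply: eq_bigr => j _ /=; nia.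
Qed.

Lemma Fadd Q1 Q2 a b : (Fq Q1 a b + Fq Q2 a b)%N = Fq (fun i j => Q1 i j + Q2 i j)%N a b.
Proof.
rewrite /Fq -big_split; apply: eq_bigr => i _; rewrite -big_split.
by apply: eq_bigr => j _ /=; nia.
Qed.

Lemma sgF_par Q Q' a b : (forall i j, odd (Q i j) = odd (Q' i j)) ->
  sg (Fq Q a b) = sg (Fq Q' a b).
Proof.
move=> h; rewrite /Fq !sg_sum; apply: eq_bigr => i _; rewrite !sg_sum.
by apply: eq_bigr => j _; apply: sg_mulpar.
Qed.

Lemma GDr q a b : Gq q (a + b) = (Gq q a + Gq q b)%N.
Proof. by rewrite /Gq -big_split; apply: eq_bigr => j _; rewrite mnmDE /=; nia. Qed.

Lemma Gadd q1 q2 a : (Gq q1 a + Gq q2 a)%N = Gq (fun j => q1 j + q2 j)%N a.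
Proof. by rewrite /Gq -big_split; apply: eq_bigr => j _ /=; nia. Qed.

Lemma sgG_par q q' a : (forall j, odd (q j) = odd (q' j)) -> sg (Gq q a) = sg (Gq q' a).
Proof. by move=> h; rewrite /Gq !sg_sum; apply: eq_bigr => j _; apply: sg_mulpar. Qed.

Lemma GU q i : Gq q U_(i) = q i.
Proof.
rewrite /Gq (bigD1 i) //= big1 ?addn0; first by rewrite mnm1E eqxx muln1.
by move=> j /negbTE ji; rewrite mnm1E eq_sym ji muln0.
Qed.

Lemma FUl Q i b : Fq Q U_(i) b = Gq (Q i) b.
Proof.
rewrite /Fq (bigD1 i) //= [X in (_ + X)%N]big1 ?addn0.
  by apply: eq_bigr => j _; rewrite mnm1E eqxx mul1n.
by move=> j /negbTE ji; apply: big1 => l _; rewrite mnm1E eq_sym ji mul0n muln0.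
Qed.

Lemma FUr Q i b : Fq Q b U_(i) = Gq (fun j => Q j i) b.
Proof. by rewrite Fflip FUl. Qed.

Lemma sum_condG (Pr : pred 'I_n) (a : MN) :
  (\sum_(j < n | Pr j) a j)%N = Gq (fun j => nat_of_bool (Pr j)) a.
Proof. by rewrite big_mkcond /Gq; apply: eq_bigr => j _; case: (Pr j); rewrite ?mul1n. Qed.

Lemma osignF (a b : MN) : osign k a b = sg (Fq (fun i j => nat_of_bool (j < i)%N) a b).
Proof.
rewrite /osign /sg /Fq; congr (_ ^+ _); apply: eq_bigr => i _.
by rewrite big_mkcond; apply: eq_bigr => j _; case: ltnP; rewrite ?mul1n.
Qed.

End Signs.

End P5.
Import P5.

Module P6.
Set Implicit Arguments. Unset Strict Implicit. Unset Printing Implicit Defensive.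
Import GRing.Theory.
Local Open Scope ring_scope.

Section Perm.
Variables (k : fieldType) (n : nat) (s : 'S_n) (d : 'I_n -> k).
Local Notation P := {mpoly k[n]}.
Local Notation MN := 'X_{1..n}.

Definition Qs (i j : 'I_n) : nat := nat_of_bool ((i < j)%N && (s j < s i)%N).
Definition pi (a : MN) : MN := [multinom a ((s^-1)%g j) | j < n].
Definition eps (a : MN) : k := sg k (Fq Qs a a).
Definition Dd (a : MN) : k := \prod_i d i ^+ a i.
Definition w (a : MN) : k := Dd a * eps a.

Lemma piE a i : pi a (s i) = a i.
Proof. by rewrite mnmE permK. Qed.

Lemma piD a b : pi (a + b) = (pi a + pi b)%MM.
Proof. by apply/mnmP => j; rewrite !(mnmE, mnmDE). Qed.

Lemma piB a b : pi (a - b) = (pi a - pi b)%MM.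
Proof. by apply/mnmP => j; rewrite !(mnmE, mnmBE). Qed.

Lemma piU i : pi U_(i) = (U_(s i))%MM.
Proof.
apply/mnmP => j; rewrite mnmE !mnm1E.
by congr (nat_of_bool _); apply/eqP/eqP => [->|<-]; rewrite ?permKV ?permK.
Qed.

Lemma pi0 : pi 0%MM = 0%MM.
Proof. by apply/mnmP => j; rewrite mnmE !mnm0E. Qed.

Lemma mdeg_pi a : mdeg (pi a) = mdeg a.
Proof.
rewrite !mdegE (reindex_inj (@perm_inj _ s)) /=.
by apply: eq_bigr => i _; rewrite piE.
Qed.

Lemma sum_pi (F : 'I_n -> nat) (G : 'I_n -> 'I_n -> nat) :
  (\sum_i F i = \sum_i F (s i))%N.
Proof. exact: (reindex_inj (@perm_inj _ s)). Qed.

Lemma osign_pi a b :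
  osign k (pi a) (pi b) = sg k (Fq (fun i j => nat_of_bool (s j < s i)%N) a b).
Proof.
rewrite osignF /Fq (reindex_inj (@perm_inj _ s)) /=; congr (sg k _).
apply: eq_bigr => i _; rewrite (reindex_inj (@perm_inj _ s)) /=.
by apply: eq_bigr => j _; rewrite !piE.
Qed.

Lemma s_neq i j : i != j -> s i != s j.
Proof. by apply: contra => /eqP /perm_inj ->. Qed.

Lemma eps_mul a b :
  osign k a b * eps (a + b) = eps a * eps b * osign k (pi a) (pi b).
Proof.
have key : sg k (Fq (fun i j => nat_of_bool (j < i)%N) a b) * sg k (Fq Qs a b)
   * sg k (Fq (fun i j => Qs j i) a b) = sg k (Fq (fun i j => nat_of_bool (s j < s i)%N) a b).
  rewrite -!sgD !Fadd; apply: sgF_par => i j /=; rewrite /Qs.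
  case: (eqVneq i j) => [->|ij]; first by rewrite !ltnn.
  have sij := s_neq ij.
  case: (ltngtP i j) => [h|h|h]; last by rewrite (val_inj h) eqxx in ij.
    by rewrite /= addn0.
  by case: (ltngtP (s i) (s j)) => // h'; rewrite (val_inj h') eqxx in sij.
rewrite osignF osign_pi /eps FDl !FDr !sgD -key [Fq Qs b a]Fflip.
ring.
Qed.

Lemma Dd_add a b : Dd (a + b) = Dd a * Dd b.
Proof. by rewrite /Dd -big_split; apply: eq_bigr => i _; rewrite mnmDE exprD. Qed.

Lemma Dd_U i : Dd U_(i) = d i.
Proof.
rewrite /Dd (bigD1 i) //= big1 ?mulr1; first by rewrite mnm1E eqxx expr1.
by move=> j /negbTE ji; rewrite mnm1E eq_sym ji expr0.
Qed.

Lemma Dd0 : Dd 0%MM = 1.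
Proof. by rewrite /Dd big1 // => i _; rewrite mnm0E expr0. Qed.

Lemma eps0 : eps 0%MM = 1.
Proof.
rewrite /eps /Fq big1 ?/sg ?expr0 // => i _; apply: big1 => j _.
by rewrite mnm0E mul0n muln0.
Qed.

Lemma w0 : w 0%MM = 1.
Proof. by rewrite /w Dd0 eps0 mulr1. Qed.

Lemma w_mul a b :
  osign k a b * w (a + b) = w a * w b * osign k (pi a) (pi b).
Proof.
have := eps_mul a b; rewrite /w Dd_add => h.
transitivity (Dd a * Dd b * (osign k a b * eps (a + b))); first by ring.
by rewrite h; ring.
Qed.

Lemma eps_dbl b l : eps (b + (U_(l) + U_(l))) = eps b.
Proof.
rewrite /eps !FDl !FDr.
set x := Fq Qs b b; set y1 := Fq Qs b U_(l); set y2 := Fq Qs U_(l) b; set y3 := Fq Qs U_(l) U_(l).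
have -> : (x + (y1 + y1) + ((y2 + (y3 + y3)) + (y2 + (y3 + y3))))%N =
  (x + ((y1 + y2 + y3 + y3) + (y1 + y2 + y3 + y3)))%N by lia.
by rewrite sgD sg_dbl mulr1.
Qed.

Lemma eps_addU b i : eps (b + U_(i)) = eps b * sg k (Gq (fun j => Qs j i + Qs i j)%N b).
Proof.
rewrite /eps !FDl !FDr [Fq Qs U_(i) U_(i)]FUl GU [Fq Qs U_(i) b]FUl [Fq Qs b U_(i)]FUr /Qs ltnn /= addn0 -Gadd.
by rewrite !sgD; ring.
Qed.

End Perm.

End P6.
Import P6.

Module P7.
Set Implicit Arguments. Unset Strict Implicit. Unset Printing Implicit Defensive.
Import GRing.Theory.
Local Open Scope ring_scope.

Section Phi.
Variables (k : fieldType) (n : nat) (s : 'S_n) (d : 'I_n -> k).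
Hypothesis hd : forall i, d i != 0.
Local Notation P := {mpoly k[n]}.
Local Notation MN := 'X_{1..n}.
Local Notation pi := (P6.pi s).
Local Notation w := (P6.w s d).

Definition phiS (p : P) : P := lin_ext (fun a => w a *: 'X_[pi a]) p.

Lemma phiS_lin : is_lin phiS.
Proof. exact: lin_ext_lin. Qed.

Lemma phiS_X a : phiS 'X_[a] = w a *: 'X_[pi a].
Proof. exact: lin_extX. Qed.

Lemma phiS_1 : phiS 1 = 1.
Proof. by rewrite -mpolyX0 phiS_X pi0 w0 scale1r. Qed.

Lemma phiS_mul p q : phiS (omul p q) = omul (phiS p) (phiS q).
Proof.
apply: (@lin_eq _ _ _ (fun p => phiS (omul p q)) (fun p => omul (phiS p) (phiS q))).
- exact: (lin_comp phiS_lin (omul_linl q)).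
- exact: (lin_comp (omul_linl (phiS q)) phiS_lin).
move=> a.
apply: (@lin_eq _ _ _ (fun q => phiS (omul 'X_[a] q)) (fun q => omul (phiS 'X_[a]) (phiS q))).
- exact: (lin_comp phiS_lin (omul_linr _)).
- exact: (lin_comp (omul_linr _) phiS_lin).
move=> b.
rewrite omulXX (linZ _ _ phiS_lin) !phiS_X (linZ _ _ (omul_linl _)) (linZ _ _ (omul_linr _)).
by rewrite omulXX !scalerA piD w_mul.
Qed.

Lemma phiS_homog dg p : ohomog dg p -> ohomog dg (phiS p).
Proof.
move=> /allP hp; apply/allP => m /msupp_sum_le /flattenP [sq].
case/mapP => a; rewrite filter_predT => ha -> /msuppZ_le /msuppZ_le.
by rewrite msuppX inE => /eqP ->; rewrite mdeg_pi; apply: hp.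
Qed.

Lemma w_neq0 a : w a != 0.
Proof.
rewrite /P6.w mulf_neq0 //; last by rewrite /eps /sg signr_eq0.
by apply/prodf_neq0 => i _; apply: expf_neq0.
Qed.

Definition pinv (b : MN) : MN := [multinom b (s j) | j < n].

Lemma pinvK a : pinv (pi a) = a.
Proof. by apply/mnmP => j; rewrite mnmE P6.piE. Qed.

Lemma piK b : pi (pinv b) = b.
Proof. by apply/mnmP => j; rewrite !mnmE permKV. Qed.

Definition psiS (p : P) : P := lin_ext (fun b => (w (pinv b))^-1 *: 'X_[pinv b]) p.

Lemma phiS_bij : bijective phiS.
Proof.
have lpsi : is_lin psiS by exact: lin_ext_lin.
have lid : is_lin (fun p : P => p) by [].
exists psiS.
- move=> p; apply: (@lin_eq _ _ _ (fun p => psiS (phiS p)) (fun p => p)) => //.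
    exact: (lin_comp lpsi phiS_lin).
  move=> a; rewrite phiS_X (linZ _ _ lpsi) /psiS lin_extX pinvK scalerA.
  by rewrite mulfV ?w_neq0 // scale1r.
- move=> p; apply: (@lin_eq _ _ _ (fun p => phiS (psiS p)) (fun p => p)) => //.
    exact: (lin_comp phiS_lin lpsi).
  move=> b; rewrite /psiS lin_extX (linZ _ _ phiS_lin) phiS_X piK scalerA.
  by rewrite mulVf ?w_neq0 // scale1r.
Qed.


Lemma par_key (b : MN) (i : 'I_n) :
  sg k (Gq (fun j => nat_of_bool (j < i)%N) b) =
  sg k (Gq (fun j => Qs s j i + Qs s i j)%N b) * sg k (Gq (fun j => nat_of_bool (s j < s i)%N) b).
Proof.
rewrite -sgD Gadd; apply: sgG_par => j /=; rewrite /Qs.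
case: (eqVneq j i) => [->|ji]; first by rewrite !ltnn.
have sji := s_neq s ji.
case: (ltngtP j i) => [h|h|h]; last by rewrite (val_inj h) eqxx in ji.
  by case: (ltngtP (s i) (s j)) => // h'; rewrite (val_inj h') eqxx in sji.
by rewrite /= add0n addnn odd_double.
Qed.

Lemma scal_id (M M' : 'M[k]_n) (hM : forall i l, d i * M' (s i) (s l) = M i l * d l ^+ 2)
  (a : MN) i l : (0 < a i)%N ->
  sg k (\sum_(j < n | (j < i)%N) a j) * (M i l * w (a - U_(i) + (U_(l) + U_(l)))) =
  w a * (sg k (\sum_(j < n | (s j < s i)%N) a j) * M' (s i) (s l)).
Proof.
move=> ai.
have [b ->] : exists b, a = (b + U_(i))%MM.
  exists (a - U_(i))%MM; apply/mnmP => j; rewrite mnmDE mnmBE mnm1E.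
  by case: eqP => [<-|_] /=; lia.
have -> : (b + U_(i) - U_(i))%MM = b.
  by apply/mnmP => j; rewrite mnmBE mnmDE; lia.
rewrite !sum_condG !GDr !GU !ltnn !addn0 par_key.
rewrite /P6.w eps_dbl eps_addU !Dd_add !Dd_U.
apply: (mulfI (hd i)).
transitivity (Dd d b * eps k s b * sg k (Gq (fun j => Qs s j i + Qs s i j)%N b) *
   sg k (Gq (fun j => nat_of_bool (s j < s i)%N) b) * d i * (M i l * d l ^+ 2)).
  by ring.
by rewrite -hM; ring.
Qed.

Lemma phiS_dA (M M' : 'M[k]_n) (hM : forall i l, d i * M' (s i) (s l) = M i l * d l ^+ 2) p :
  phiS (dA M p) = dA M' (phiS p).
Proof.
apply: (@lin_eq _ _ _ (fun p => phiS (dA M p)) (fun p => dA M' (phiS p))).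
- exact: (lin_comp phiS_lin (dA_lin M)).
- exact: (lin_comp (dA_lin M') phiS_lin).
move=> a; rewrite dA_X phiS_X (linZ _ _ (dA_lin M')) dA_X !dmonE.
rewrite (lin_sum _ _ phiS_lin) scaler_sumr [RHS](reindex_inj (@perm_inj _ s)) /=.
apply: eq_bigr => i _.
rewrite (linZ _ _ phiS_lin) (lin_sum _ _ phiS_lin) P6.piE.
case: (boolP (odd (a i))) => oa; last by rewrite /= !mulr0 !scale0r scaler0.
have ai : (0 < a i)%N by move: oa; case: (a i).
rewrite /= !mulr1 [X in _ *: (_ *: X)](reindex_inj (@perm_inj _ s)) /=.
rewrite [X in _ *: (_ ^+ X *: _)](reindex_inj (@perm_inj _ s)) /=.
rewrite !scaler_sumr; apply: eq_bigr => l _.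
rewrite (linZ _ _ phiS_lin) phiS_X !scalerA piD piB piD !piU.
congr (_ *: _).
under [X in _ = _ * _ ^+ X * _]eq_bigr do rewrite P6.piE.
rewrite -!mulrA; have := scal_id hM l ai; rewrite /sg => ->; by rewrite /P6.w -!mulrA.
Qed.

End Phi.

End P7.
Import P7.

Module P8.
Set Implicit Arguments. Unset Strict Implicit. Unset Printing Implicit Defensive.
Import GRing.Theory.
Local Open Scope ring_scope.

Section Back.
Variables (k : fieldType) (n : nat).

Lemma backward (M M' C : 'M[k]_n) : QPL C ->
  M' = invmx C *m M *m map_mx (fun c => c ^+ 2) C -> dg_isomorphic M M'.
Proof.
case/and3P => uC /forallP hr /forallP hc eM.
have hrow : forall i, exists x, forall j, (C i j != 0) = (j == x).
  move=> i; have /cards1P [x hx] := hr i; exists x => j.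
  by move/setP: hx => /(_ j); rewrite !inE.
have hcol : forall j, exists x, forall i, (C i j != 0) = (i == x).
  move=> j; have /cards1P [x hx] := hc j; exists x => i.
  by move/setP: hx => /(_ i); rewrite !inE.
have hrow' : forall i, exists j, C i j != 0.
  by move=> i; have [x hx] := hrow i; exists x; rewrite hx.
pose f i := xchoose (hrow' i).
have fP : forall i, C i (f i) != 0 by move=> i; exact: (xchooseP (hrow' i)).
have rowu : forall i j, C i j != 0 -> j = f i.
  move=> i j; have [x hx] := hrow i; rewrite hx => /eqP ->.
  by have := fP i; rewrite hx => /eqP.
have colu : forall i i' j, C i j != 0 -> C i' j != 0 -> i' = i.
  move=> i i' j; have [x hx] := hcol j; rewrite !hx => /eqP -> /eqP //.
have finj : injective f.
  move=> i i' e; apply: (colu i' i (f i')); first exact: fP.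
  by rewrite -e fP.
pose s := perm finj.
have sE : forall i, s i = f i by move=> i; rewrite permE.
pose d i := C i (s i).
have hd : forall i, d i != 0 by move=> i; rewrite /d sE fP.
have hz : forall i j, j != s i -> C i j = 0.
  move=> i j; apply: contraNeq => /rowu ->; by rewrite sE.
have eqM : C *m M' = M *m map_mx (fun c => c ^+ 2) C.
  by rewrite eM -mulmxA mulKVmx.
have hM : forall i l, d i * M' (s i) (s l) = M i l * d l ^+ 2.
  move=> i l; move/matrixP: eqM => /(_ i (s l)); rewrite !mxE.
  rewrite (bigD1 (s i)) //= big1 ?addr0; last first.
    by move=> j /hz ->; rewrite mul0r.
  rewrite (bigD1 l) //= big1 ?addr0; last first.
    move=> j jl; rewrite mxE hz ?expr0n ?mulr0 //.
    by apply: contra jl => /eqP /perm_inj ->.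
  by rewrite mxE => ->.
exists (phiS s d); split; last by move=> p; apply: phiS_dA.
split.
- exact: phiS_lin.
- exact: phiS_1.
- exact: phiS_mul.
- exact: phiS_homog.
- exact: (phiS_bij s hd).
Qed.

End Back.

End P8.
Import P8.

Unset Implicit Arguments. Set Strict Implicit.

Theorem theorem3p6 (k : closedFieldType) (k_char0 : [pchar k] =i pred0)
    (n : nat) (n_ge2 : (2 <= n)%N) (M M' : 'M[k]_n) :
  dg_isomorphic M M' <->
  exists C : 'M[k]_n,
    QPL C /\ M' = invmx C *m M *m map_mx (fun c => c ^+ 2) C.
Proof.
have two : 2%:R != 0 :> k.
  by apply/negP => /(natf0_pchar (isT : (0 < 2)%N)) [p]; rewrite k_char0.
split; first exact: (@forward k n two M M').
by case=> C [qC eM]; exact: (@backward k n M M' C qC eM).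
Qed.
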